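(* Let $N\ge 1$ and let $h_\beta,h_1,\dots,h_{N-1}$ be arbitrary real numbers. Consider the $(N+1)$-qubit system (a sensor qubit $\beta$ followed by chain qubits $1,\dots,N$) with Hamiltonian $$H=\frac{h_\beta}{2}(X_\beta X_1+Y_\beta Y_1)+\sum_{k=1}^{N-1}\frac{h_k}{2}(X_kX_{k+1}+Y_kY_{k+1}),$$ initial state $\rho_0=\frac{I+X_\beta}{2}\otimes \frac{I}{2^N}$ (sensor in the $+1$ eigenstate of $X$, chain maximally mixed), and output $y(t)=\operatorname{Tr}\big(M\,e^{-\mathrm{i}Ht}\rho_0e^{\mathrm{i}Ht}\big)$ where the measured observable is $M=Y_\beta$ or $M=Z_\beta$. Then $y(t)=0$ for all $t\ge 0$ and all values of the parameters. Consequently the single-qubit sensor cannot identify the parameters $h_\beta,h_1,\dots,h_{N-1}$ (distinct parameter values yield identical outputs).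
   Context: $X,Y,Z$ denote the Pauli matrices $\sigma_x=\begin{pmatrix}0&1\\1&0\end{pmatrix}$, $\sigma_y=\begin{pmatrix}0&-\mathrm{i}\\ \mathrm{i}&0\end{pmatrix}$, $\sigma_z=\begin{pmatrix}1&0\\0&-1\end{pmatrix}$; a subscript indicates which qubit the operator acts on, with identity on all other qubits (tensor products and identities are suppressed). $\hbar=1$. *)

(* Defs.v *)
From Stdlib Require Import Reals Lra Lia Arith Bool List.
Open Scope R_scope.

Record C := mkC { re : R ; im : R }.
Definition C0 : C := mkC 0 0.
Definition C1 : C := mkC 1 0.
Definition Ci : C := mkC 0 1.
Definition RtoC (x : R) : C := mkC x 0.
Definition Cadd (a b : C) : C := mkC (re a + re b) (im a + im b).
Definition Copp (a : C) : C := mkC (- re a) (- im a).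
Definition Cmul (a b : C) : C :=
  mkC (re a * re b - im a * im b) (re a * im b + im a * re b).
Definition Cconj (a : C) : C := mkC (re a) (- im a).

Fixpoint csum (f : nat -> C) (n : nat) : C :=
  match n with O => C0 | S m => Cadd (csum f m) (f m) end.

Definition Mat := nat -> nat -> C.
Definition mzero : Mat := fun _ _ => C0.
Definition mid : Mat := fun i j => if Nat.eqb i j then C1 else C0.
Definition madd (A B : Mat) : Mat := fun i j => Cadd (A i j) (B i j).
Definition mscale (c : C) (A : Mat) : Mat := fun i j => Cmul c (A i j).
Definition mmul (d : nat) (A B : Mat) : Mat :=
  fun i j => csum (fun k => Cmul (A i k) (B k j)) d.
Definition madj (A : Mat) : Mat := fun i j => Cconj (A j i).
Definition mtrace (d : nat) (A : Mat) : C := csum (fun i => A i i) d.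
Fixpoint mpow (d : nat) (A : Mat) (k : nat) : Mat :=
  match k with O => mid | S m => mmul d A (mpow d A m) end.

Fixpoint expm_partial (d : nat) (A : Mat) (n : nat) : Mat :=
  match n with
  | O => mid
  | S m => madd (expm_partial d A m)
                (mscale (RtoC (/ INR (fact (S m)))) (mpow d A (S m)))
  end.

Definition is_expm (d : nat) (A U : Mat) : Prop :=
  forall i j, (i < d)%nat -> (j < d)%nat ->
    Un_cv (fun n => re (expm_partial d A n i j)) (re (U i j)) /\
    Un_cv (fun n => im (expm_partial d A n i j)) (im (U i j)).

Definition sigX : Mat := fun a b =>
  match a, b with 0, 1 => C1 | 1, 0 => C1 | _, _ => C0 end%nat.
Definition sigY : Mat := fun a b =>
  match a, b with 0, 1 => Copp Ci | 1, 0 => Ci | _, _ => C0 end%nat.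
Definition sigZ : Mat := fun a b =>
  match a, b with 0, 0 => C1 | 1, 1 => Copp C1 | _, _ => C0 end%nat.

(* bit q of the basis index i (qubit q of the computational basis state |i>) *)
Definition bit (q i : nat) : nat := Nat.b2n (Nat.testbit i q).

(* On n qubits (dimension 2^n): the operator s acting on qubit q, tensored
   with the identity on all other qubits. *)
Definition on_qubit (n q : nat) (s : Mat) : Mat := fun i j =>
  if forallb (fun r => Nat.eqb r q || Nat.eqb (bit r i) (bit r j)) (seq 0 n)
  then s (bit q i) (bit q j) else C0.

(* The (N+1)-qubit system: qubit 0 is the sensor beta, qubits 1..N the chain. *)
Definition nq (N : nat) : nat := S N.
Definition dim (N : nat) : nat := 2 ^ nq N.
Definition Xq N q := on_qubit (nq N) q sigX.
Definition Yq N q := on_qubit (nq N) q sigY.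
Definition Zq N q := on_qubit (nq N) q sigZ.

Definition xy_term (N : nat) (h : R) (a b : nat) : Mat :=
  mscale (RtoC (h / 2))
    (madd (mmul (dim N) (Xq N a) (Xq N b)) (mmul (dim N) (Yq N a) (Yq N b))).

Fixpoint chain_sum (N : nat) (h : nat -> R) (m : nat) : Mat :=
  match m with
  | O => mzero
  | S p => madd (chain_sum N h p) (xy_term N (h (S p)) (S p) (S (S p)))
  end.

Definition Ham (N : nat) (hb : R) (h : nat -> R) : Mat :=
  madd (xy_term N hb 0 1) (chain_sum N h (N - 1)).

(* rho_0 = (I + X_beta)/2 (x) I/2^N  =  (I + X_beta) / 2^(N+1) *)
Definition rho0 (N : nat) : Mat :=
  mscale (RtoC (/ 2 ^ nq N)) (madd mid (Xq N 0)).

(* y(t) = Tr(M U rho_0 V) where U = e^{-iHt}, V = e^{iHt} *)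
Definition output (N : nat) (M U V : Mat) : C :=
  mtrace (dim N) (mmul (dim N) M (mmul (dim N) U (mmul (dim N) (rho0 N) V))).

(* Main.v *)
Require Import Defs.
From Stdlib Require Import Reals.
From Stdlib Require Import Lra Lia Arith Bool List.
Open Scope R_scope.
Import Defs.

Lemma C_eq : forall a b : C, re a = re b -> im a = im b -> a = b.
Proof. intros [a1 a2] [b1 b2]; simpl; intros; subst; reflexivity. Qed.

Ltac ceq := apply C_eq; simpl; ring.

Lemma csum_ext : forall f g n, (forall k, (k < n)%nat -> f k = g k) -> csum f n = csum g n.
Proof.
  intros f g n; induction n; intros H; simpl; auto.
  rewrite IHn by (intros; apply H; lia). rewrite H by lia. reflexivity.
Qed.

Lemma csum_scale : forall c f n, csum (fun k => Cmul c (f k)) n = Cmul c (csum f n).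
Proof.
  intros c f n; induction n; simpl.
  - ceq.
  - rewrite IHn. ceq.
Qed.

Lemma csum_shift : forall g n, csum g (S n) = Cadd (g 0%nat) (csum (fun k => g (S k)) n).
Proof.
  intros g n; induction n.
  - simpl. ceq.
  - change (csum g (S (S n))) with (Cadd (csum g (S n)) (g (S n))).
    rewrite IHn. simpl. ceq.
Qed.

Lemma csum_rev : forall f n, csum f n = csum (fun k => f (n - 1 - k)%nat) n.
Proof.
  intros f n; induction n.
  - reflexivity.
  - rewrite (csum_shift (fun k => f (S n - 1 - k)%nat)).
    change (csum f (S n)) with (Cadd (csum f n) (f n)).
    rewrite IHn.
    replace (S n - 1 - 0)%nat with n by lia.
    rewrite (csum_ext (fun k => f (n - 1 - k)%nat) (fun k => f (S n - 1 - S k)%nat))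
      by (intros; f_equal; lia).
    ceq.
Qed.

(* symmetry under the global bit flip i -> d-1-i *)
Definition sym (d : nat) (s : R) (A : Mat) : Prop :=
  forall i j, (i < d)%nat -> (j < d)%nat ->
    A (d - 1 - i)%nat (d - 1 - j)%nat = Cmul (RtoC s) (A i j).

Lemma sym_add : forall d s A B, sym d s A -> sym d s B -> sym d s (madd A B).
Proof. unfold sym, madd; intros. rewrite H, H0 by auto. ceq. Qed.

Lemma sym_scale : forall d s c A, sym d s A -> sym d s (mscale c A).
Proof. unfold sym, mscale; intros. rewrite H by auto. ceq. Qed.

Lemma sym_zero : forall d s, sym d s mzero.
Proof. unfold sym, mzero; intros. ceq. Qed.

Lemma sym_mid : forall d, sym d 1 mid.
Proof.
  unfold sym, mid; intros.
  destruct (Nat.eqb_spec (d-1-i) (d-1-j)); destruct (Nat.eqb_spec i j); try lia; ceq.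
Qed.

Lemma sym_mul : forall d s1 s2 s A B, s1 * s2 = s -> sym d s1 A -> sym d s2 B ->
  sym d s (mmul d A B).
Proof.
  unfold mmul; intros d s1 s2 s A B Hs HA HB i j Hi Hj.
  rewrite csum_rev.
  rewrite (csum_ext _ (fun k => Cmul (RtoC s) (Cmul (A i k) (B k j)))).
  - apply csum_scale.
  - intros k Hk. rewrite HA, HB by lia. subst s. ceq.
Qed.

Lemma sym_pow : forall d A k, sym d 1 A -> sym d 1 (mpow d A k).
Proof.
  intros d A k H; induction k; simpl.
  - apply sym_mid.
  - eapply sym_mul; eauto; ring.
Qed.

Lemma sym_expp : forall d A n, sym d 1 A -> sym d 1 (expm_partial d A n).
Proof.
  intros d A n H; induction n; simpl.
  - apply sym_mid.
  - apply sym_add; auto. apply sym_scale. exact (sym_pow d A (S n) H).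
Qed.

Lemma trace_odd : forall d A, sym d (-1) A -> mtrace d A = C0.
Proof.
  unfold mtrace; intros d A H.
  assert (E : csum (fun i => A i i) d = Cmul (RtoC (-1)) (csum (fun i => A i i) d)).
  { rewrite csum_rev at 1. rewrite <- csum_scale. apply csum_ext. intros; apply H; auto. }
  destruct (csum (fun i => A i i) d) as [x y]. unfold Cmul, RtoC in E; simpl in E.
  injection E; intros. apply C_eq; simpl; lra.
Qed.

Lemma bit_flip : forall n i r, (i < 2 ^ n)%nat -> (r < n)%nat ->
  bit r (2 ^ n - 1 - i) = (1 - bit r i)%nat.
Proof.
  intros n i r Hi Hr. unfold bit.
  assert (E : (2 ^ n - 1 - i = Nat.ldiff (Nat.ones n) i)%nat).
  { rewrite <- Nat.sub_nocarry_ldiff.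
    - rewrite Nat.ones_equiv. lia.
    - apply Nat.ldiff_ones_r_low.
      destruct (Nat.eq_dec i 0) as [->|Hi0]; [change (Nat.log2 0) with 0%nat; lia|].
      apply Nat.log2_lt_pow2; lia. }
  rewrite E, Nat.ldiff_spec, Nat.ones_spec_low by auto.
  destruct (Nat.testbit i r); reflexivity.
Qed.

Lemma forallb_ext_in : forall (A : Type) (f g : A -> bool) l,
  (forall x, In x l -> f x = g x) -> forallb f l = forallb g l.
Proof.
  intros A f g l; induction l; simpl; intros H; auto.
  rewrite H by auto. rewrite IHl by auto. reflexivity.
Qed.

Lemma bit_le1 : forall r i, (bit r i <= 1)%nat.
Proof. intros; unfold bit; destruct (Nat.testbit i r); simpl; lia. Qed.

Lemma sym_on_qubit : forall n q s sg, (q < n)%nat ->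
  (forall a b, (a <= 1)%nat -> (b <= 1)%nat -> sg (1 - a)%nat (1 - b)%nat = Cmul (RtoC s) (sg a b)) ->
  sym (2 ^ n) s (on_qubit n q sg).
Proof.
  unfold sym, on_qubit; intros n q s sg Hq Hs i j Hi Hj.
  rewrite (forallb_ext_in _ _ (fun r => Nat.eqb r q || Nat.eqb (bit r i) (bit r j))).
  - destruct forallb.
    + rewrite !bit_flip by auto. apply Hs; apply bit_le1.
    + ceq.
  - intros r Hr. apply in_seq in Hr. rewrite !bit_flip by lia.
    pose proof (bit_le1 r i); pose proof (bit_le1 r j).
    f_equal. apply Bool.eq_iff_eq_true. rewrite !Nat.eqb_eq. lia.
Qed.

Lemma sym_X : forall N q, (q < nq N)%nat -> sym (dim N) 1 (Xq N q).
Proof.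
  intros. apply sym_on_qubit; auto. intros a b Ha Hb.
  destruct a as [|[|]]; destruct b as [|[|]]; try lia; simpl; ceq.
Qed.
Lemma sym_Y : forall N q, (q < nq N)%nat -> sym (dim N) (-1) (Yq N q).
Proof.
  intros. apply sym_on_qubit; auto. intros a b Ha Hb.
  destruct a as [|[|]]; destruct b as [|[|]]; try lia; simpl; ceq.
Qed.
Lemma sym_Z : forall N q, (q < nq N)%nat -> sym (dim N) (-1) (Zq N q).
Proof.
  intros. apply sym_on_qubit; auto. intros a b Ha Hb.
  destruct a as [|[|]]; destruct b as [|[|]]; try lia; simpl; ceq.
Qed.

Lemma sym_xy : forall N h a b, (a < nq N)%nat -> (b < nq N)%nat -> sym (dim N) 1 (xy_term N h a b).
Proof.
  intros. unfold xy_term. apply sym_scale. apply sym_add.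
  - eapply sym_mul; [|apply sym_X; auto|apply sym_X; auto]. ring.
  - eapply sym_mul; [|apply sym_Y; auto|apply sym_Y; auto]. ring.
Qed.

Lemma sym_chain : forall N h m, (m <= N - 1)%nat -> sym (dim N) 1 (chain_sum N h m).
Proof.
  intros N h m; induction m; intros Hm; simpl.
  - apply sym_zero.
  - apply sym_add. apply IHm; lia. apply sym_xy; unfold nq; lia.
Qed.

Lemma sym_Ham : forall N hb h, (1 <= N)%nat -> sym (dim N) 1 (Ham N hb h).
Proof.
  intros. unfold Ham. apply sym_add.
  - apply sym_xy; unfold nq; lia.
  - apply sym_chain; lia.
Qed.

Lemma sym_rho : forall N, sym (dim N) 1 (rho0 N).
Proof.
  intros. unfold rho0. apply sym_scale. apply sym_add. apply sym_mid. apply sym_X. unfold nq; lia.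
Qed.

Definition conv (d : nat) (F : nat -> Mat) (L : Mat) : Prop :=
  forall i j, (i < d)%nat -> (j < d)%nat ->
    Un_cv (fun n => re (F n i j)) (re (L i j)) /\ Un_cv (fun n => im (F n i j)) (im (L i j)).

Lemma cv_const : forall c, Un_cv (fun _ => c) c.
Proof. intros c eps He. exists 0%nat. intros. rewrite R_dist_eq. auto. Qed.

Lemma cmul_cv : forall (a b : nat -> C) x y,
  Un_cv (fun n => re (a n)) (re x) -> Un_cv (fun n => im (a n)) (im x) ->
  Un_cv (fun n => re (b n)) (re y) -> Un_cv (fun n => im (b n)) (im y) ->
  Un_cv (fun n => re (Cmul (a n) (b n))) (re (Cmul x y)) /\
  Un_cv (fun n => im (Cmul (a n) (b n))) (im (Cmul x y)).
Proof.
  intros. simpl. split.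
  - apply CV_minus; apply CV_mult; auto.
  - apply CV_plus; apply CV_mult; auto.
Qed.

Lemma csum_cv : forall (f : nat -> nat -> C) (g : nat -> C) n,
  (forall k, (k < n)%nat -> Un_cv (fun m => re (f m k)) (re (g k)) /\
                            Un_cv (fun m => im (f m k)) (im (g k))) ->
  Un_cv (fun m => re (csum (f m) n)) (re (csum g n)) /\
  Un_cv (fun m => im (csum (f m) n)) (im (csum g n)).
Proof.
  intros f g n; induction n; intros H; simpl.
  - split; apply cv_const.
  - destruct IHn as [H1 H2]. intros; apply H; lia.
    destruct (H n) as [H3 H4]. lia.
    split; apply CV_plus; auto.
Qed.

Lemma conv_const : forall d A, conv d (fun _ => A) A.
Proof. intros d A i j _ _. split; apply cv_const. Qed.

Lemma conv_mul : forall d F G A B, conv d F A -> conv d G B ->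
  conv d (fun m => mmul d (F m) (G m)) (mmul d A B).
Proof.
  unfold mmul; intros d F G A B HF HG i j Hi Hj.
  apply (csum_cv (fun m k => Cmul (F m i k) (G m k j)) (fun k => Cmul (A i k) (B k j))).
  intros k Hk. destruct (HF i k) as [a1 a2]; auto. destruct (HG k j) as [b1 b2]; auto.
  apply cmul_cv; auto.
Qed.

Theorem proposition1 :
  forall (N : nat) (hb : R) (h : nat -> R) (M : Mat) (t : R) (U V : Mat),
    (1 <= N)%nat ->
    (M = Yq N 0 \/ M = Zq N 0) ->
    0 <= t ->
    is_expm (dim N) (mscale (mkC 0 (- t)) (Ham N hb h)) U ->
    is_expm (dim N) (mscale (mkC 0 t) (Ham N hb h)) V ->
    output N M U V = C0.
Proof.
  intros N hb h M t U V HN HM Ht HU HV.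
  set (d := dim N).
  set (A1 := mscale (mkC 0 (- t)) (Ham N hb h)).
  set (A2 := mscale (mkC 0 t) (Ham N hb h)).
  set (W := fun m => mmul d M (mmul d (expm_partial d A1 m)
                  (mmul d (rho0 N) (expm_partial d A2 m)))).
  assert (HMs : sym d (-1) M).
  { destruct HM as [->| ->]; [apply sym_Y|apply sym_Z]; unfold nq; lia. }
  assert (HW0 : forall m, mtrace d (W m) = C0).
  { intros m. apply trace_odd. unfold W.
    assert (HH1 : sym d 1 (expm_partial d A1 m)) by (apply sym_expp; apply sym_scale; apply sym_Ham; auto).
    assert (HH2 : sym d 1 (expm_partial d A2 m)) by (apply sym_expp; apply sym_scale; apply sym_Ham; auto).
    assert (Hr : sym d 1 (mmul d (rho0 N) (expm_partial d A2 m))) by (apply (sym_mul d 1 1); [ring|apply sym_rho|auto]).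
    assert (Hr2 : sym d 1 (mmul d (expm_partial d A1 m) (mmul d (rho0 N) (expm_partial d A2 m)))) by (apply (sym_mul d 1 1); [ring|auto|auto]).
    apply (sym_mul d (-1) 1); [ring|auto|auto]. }
  assert (HWc : conv d W (mmul d M (mmul d U (mmul d (rho0 N) V)))).
  { unfold W. apply conv_mul. apply conv_const.
    apply conv_mul. exact HU. apply conv_mul. apply conv_const. exact HV. }
  assert (Ht' : Un_cv (fun m => re (mtrace d (W m))) (re (output N M U V)) /\
                Un_cv (fun m => im (mtrace d (W m))) (im (output N M U V))).
  { unfold mtrace, output. apply (csum_cv (fun m i => W m i i)).
    intros k Hk. apply HWc; auto. }
  destruct Ht' as [H1 H2].
  apply C_eq; simpl.
  - eapply UL_sequence; [exact H1|].
    intros eps He. exists 0%nat. intros n _. rewrite HW0. simpl. rewrite R_dist_eq. auto.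
  - eapply UL_sequence; [exact H2|].
    intros eps He. exists 0%nat. intros n _. rewrite HW0. simpl. rewrite R_dist_eq. auto.
Qed.
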